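(* The logic $\mathsf{CK}\oplus\mathsf{C}_\Diamond\oplus\mathsf{N}_\Diamond$ is a conservative extension of $\mathsf{CK}_\Box$: a $\Diamond$-free formula is derivable in $\mathsf{CK}\oplus\mathsf{C}_\Diamond\oplus\mathsf{N}_\Diamond$ if and only if it is a theorem of $\mathsf{CK}_\Box$.
   Context: Formulas: $\mathbf{L}$ is generated from a countably infinite set of propositional variables by $\varphi ::= p \mid \bot \mid \varphi\wedge\varphi \mid \varphi\vee\varphi \mid \varphi\to\varphi \mid \Box\varphi \mid \Diamond\varphi$. Axioms: $\mathsf{K}_\Box$: $\Box(\varphi\to\psi)\to(\Box\varphi\to\Box\psi)$; $\mathsf{K}_\Diamond$: $\Box(\varphi\to\psi)\to(\Diamond\varphi\to\Diamond\psi)$; $\mathsf{N}_\Diamond$: $\Diamond\bot\to\bot$; $\mathsf{C}_\Diamond$: $\Diamond(\varphi\vee\psi)\to\Diamond\varphi\vee\Diamond\psi$. For a set $\mathsf{Ax}$ of axioms, $\mathsf{CK}\oplus\mathsf{Ax}$ is the relation $\Gamma\vdash_{\mathsf{Ax}}\varphi$ inductively generated by: (Ax) $\Gamma\vdash\varphi$ whenever $\varphi$ is a substitution instance of an axiom of a standard Hilbert axiomatisation of intuitionistic propositional logic, of $\mathsf{K}_\Box$, of $\mathsf{K}_\Diamond$, or of an element of $\mathsf{Ax}$; (El) $\Gamma\vdash\varphi$ if $\varphi\in\Gamma$; (MP) from $\Gamma\vdash\varphi$ and $\Gamma\vdash\varphi\to\psi$ infer $\Gamma\vdash\psi$; (Nec)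 from $\emptyset\vdash\varphi$ infer $\Gamma\vdash\Box\varphi$. A formula is derivable if $\emptyset\vdash_{\mathsf{Ax}}\varphi$. $\mathsf{CK}_\Box$ is the logic on $\Diamond$-free formulas axiomatised by intuitionistic propositional logic plus $\mathsf{K}_\Box$, closed under modus ponens and necessitation. A logic is a conservative extension of $\mathsf{CK}_\Box$ if its derivable $\Diamond$-free formulas are exactly the theorems of $\mathsf{CK}_\Box$. *)

(* Defs.v *)
From Stdlib Require Import List.

Inductive form : Type :=
| Var : nat -> form
| Bot : form
| And : form -> form -> form
| Or  : form -> form -> form
| Imp : form -> form -> form
| Box : form -> form
| Dia : form -> form.

Inductive IPL_axiom : form -> Prop :=
| ipl_K  : forall A B, IPL_axiom (Imp A (Imp B A))
| ipl_S  : forall A B C, IPL_axiom (Imp (Imp A (Imp B C)) (Imp (Imp A B) (Imp A C)))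
| ipl_AE1 : forall A B, IPL_axiom (Imp (And A B) A)
| ipl_AE2 : forall A B, IPL_axiom (Imp (And A B) B)
| ipl_AI : forall A B, IPL_axiom (Imp A (Imp B (And A B)))
| ipl_OI1 : forall A B, IPL_axiom (Imp A (Or A B))
| ipl_OI2 : forall A B, IPL_axiom (Imp B (Or A B))
| ipl_OE : forall A B C, IPL_axiom (Imp (Imp A C) (Imp (Imp B C) (Imp (Or A B) C)))
| ipl_EFQ : forall A, IPL_axiom (Imp Bot A).

Inductive CK_axiom : form -> Prop :=
| ck_ipl : forall A, IPL_axiom A -> CK_axiom A
| ck_Kbox : forall A B, CK_axiom (Imp (Box (Imp A B)) (Imp (Box A) (Box B)))
| ck_Kdia : forall A B, CK_axiom (Imp (Box (Imp A B)) (Imp (Dia A) (Dia B))).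

Definition N_dia (A : form) : Prop := A = Imp (Dia Bot) Bot.
Definition C_dia (A : form) : Prop :=
  exists B C, A = Imp (Dia (Or B C)) (Or (Dia B) (Dia C)).

Inductive derives (Ax : form -> Prop) (Gamma : form -> Prop) : form -> Prop :=
| d_ax : forall A, CK_axiom A -> derives Ax Gamma A
| d_extra : forall A, Ax A -> derives Ax Gamma A
| d_el : forall A, Gamma A -> derives Ax Gamma A
| d_mp : forall A B, derives Ax Gamma A -> derives Ax Gamma (Imp A B) -> derives Ax Gamma B
| d_nec : forall A, derives Ax (fun _ => False) A -> derives Ax Gamma (Box A).

Definition derivable (Ax : form -> Prop) (A : form) : Prop :=
  derives Ax (fun _ => False) A.

Definition CN_dia (A : form) : Prop := C_dia A \/ N_dia A.

Fixpoint dia_free (A : form) : Prop :=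
  match A with
  | Var _ | Bot => True
  | And B C | Or B C | Imp B C => dia_free B /\ dia_free C
  | Box B => dia_free B
  | Dia _ => False
  end.

Inductive CKbox_thm : form -> Prop :=
| cb_ipl : forall A, dia_free A -> IPL_axiom A -> CKbox_thm A
| cb_Kbox : forall A B, dia_free A -> dia_free B ->
    CKbox_thm (Imp (Box (Imp A B)) (Imp (Box A) (Box B)))
| cb_mp : forall A B, CKbox_thm A -> CKbox_thm (Imp A B) -> CKbox_thm B
| cb_nec : forall A, CKbox_thm A -> CKbox_thm (Box A).

(* Main.v *)
Require Import Defs.

Fixpoint tr (A : form) : form :=
  match A with
  | Var n => Var n
  | Bot => Bot
  | And B C => And (tr B) (tr C)
  | Or B C => Or (tr B) (tr C)
  | Imp B C => Imp (tr B) (tr C)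
  | Box B => Box (tr B)
  | Dia _ => Bot
  end.

Lemma tr_df : forall A, dia_free (tr A).
Proof. induction A; simpl; auto. Qed.

Lemma tr_id : forall A, dia_free A -> tr A = A.
Proof.
  induction A; simpl; intros H; try tauto;
  try (destruct H; rewrite IHA1, IHA2 by assumption; reflexivity).
  rewrite IHA by assumption; reflexivity.
Qed.

Lemma ipl_tr : forall A, IPL_axiom A -> IPL_axiom (tr A).
Proof. intros A H; destruct H; simpl; constructor. Qed.

Lemma ipl_df : forall A, IPL_axiom A -> dia_free A -> CKbox_thm A.
Proof. intros; apply cb_ipl; auto. Qed.

Lemma botbot : CKbox_thm (Imp Bot Bot).
Proof. apply cb_ipl; [simpl; auto | constructor]. Qed.

Lemma weak : forall X Y, dia_free X -> dia_free Y -> CKbox_thm Y -> CKbox_thm (Imp X Y).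
Proof.
  intros X Y HX HY H. eapply cb_mp; [exact H|].
  apply cb_ipl; [simpl; auto | constructor].
Qed.

Lemma soundtr : forall Gamma A, derives CN_dia Gamma A ->
  (forall B, ~ Gamma B) -> CKbox_thm (tr A).
Proof.
  intros Gamma A D. induction D; intros HG.
  - destruct H as [A H | A B | A B].
    + apply cb_ipl; [apply tr_df | apply ipl_tr; auto].
    + simpl. apply cb_Kbox; apply tr_df.
    + simpl. apply weak; simpl; auto using tr_df. apply botbot.
  - destruct H as [[B [C E]] | E]; subst; simpl.
    + apply cb_ipl; [simpl; auto | constructor].
    + unfold N_dia in E; subst; apply botbot.
  - exfalso; eapply HG; eauto.
  - simpl in IHD2. eapply cb_mp; eauto.
  - simpl. apply cb_nec. apply IHD. auto.
Qed.

Lemma complete : forall A, CKbox_thm A -> derivable CN_dia A.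
Proof.
  unfold derivable. intros A H; induction H.
  - apply d_ax, ck_ipl; auto; fail.
  - apply d_ax, ck_Kbox.
  - apply (d_mp _ _ A B); assumption.
  - apply d_nec; auto.
Qed.

Theorem mainTheorem12 :
  forall A : form, dia_free A -> (derivable CN_dia A <-> CKbox_thm A).
Proof.
  intros A HA; split.
  - intros D. rewrite <- (tr_id A HA). eapply soundtr; [exact D | auto].
  - apply complete.
Qed.
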